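(* Let $n\ge3$ and $(x,y)\in\mathbb{C}^n\times\mathbb{C}^{n-1}$. The following are equivalent: (i) $(x,y)\in\mathbb{G}_{1,n}$; (ii) for each $\xi\in\overline{\mathbb{D}}$, the point $(\widetilde{x}(\xi),\widetilde{y}(\xi))\in\mathbb{C}^{n-1}\times\mathbb{C}^{n-2}$ belongs to $\mathbb{G}_{1,n-1}$, where \[ \widetilde{x}_j(\xi):=\frac{(n-j)x_j-j\xi x_{j+1}}{(n-1)-\xi y_1},\ j=1,\dots,n-1,\qquad \widetilde{y}_j(\xi):=\frac{(n-1-j)y_j-(j+1)\xi y_{j+1}}{(n-1)-\xi y_1},\ j=1,\dots,n-2 \] (part of the assertion (ii) being that the denominators $(n-1)-\xi y_1$ are nonzero for $\xi\in\overline{\mathbb{D}}$).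
   Context: $\mathbb{D}$ is the open unit disc. For $N\ge2$ and $(x,y)\in\mathbb{C}^N\times\mathbb{C}^{N-1}$: $P_N(z;x):=\sum_{j=0}^{N-1}(-1)^jx_{j+1}z^j$, $Q_N(z;y):=1+\sum_{j=1}^{N-1}(-1)^jy_jz^j$, and $\mathbb{G}_{1,N}:=\{(x,y): \text{the zero set of }(z,w)\mapsto Q_N(z;y)-wP_N(z;x)\text{ in }\mathbb{C}^2\text{ does not meet }\overline{\mathbb{D}}^2\}$. *)

(* Defs.v *)
(* Complex numbers: an arbitrary numClosedFieldType C
   (algebraically closed field with its modulus `|_|; e.g. the complex numbers). *)
From HB Require Import structures.
From mathcomp Require Import all_boot all_order all_algebra.
Set Implicit Arguments. Unset Strict Implicit. Unset Printing Implicit Defensive.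
Import Order.TTheory GRing.Theory Num.Theory.
Local Open Scope ring_scope.

(* 1-indexed access to a vector v : 'I_N -> C : coord1 v j = v_j for 1 <= j <= N
   (and 0 out of range; only used in range). *)
Definition coord1 (C : numClosedFieldType) (N : nat) (v : 'I_N -> C) (j : nat) : C :=
  match @insub nat (fun k => k < N)%N _ j.-1 with
  | Some i => v i
  | None => 0
  end.

Definition PN (C : numClosedFieldType) (N : nat) (x : 'I_N -> C) (z : C) : C :=
  \sum_(j < N) (-1) ^+ j * coord1 x j.+1 * z ^+ j.

Definition QN (C : numClosedFieldType) (N : nat) (y : 'I_N.-1 -> C) (z : C) : C :=
  1 + \sum_(1 <= j < N) (-1) ^+ j * coord1 y j * z ^+ j.

Definition G1 (C : numClosedFieldType) (N : nat) (x : 'I_N -> C) (y : 'I_N.-1 -> C) : Prop :=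
  forall z w : C, `|z| <= 1 -> `|w| <= 1 -> QN y z - w * PN x z != 0.

Definition xtilde (C : numClosedFieldType) (n : nat) (x : 'I_n -> C) (y : 'I_n.-1 -> C)
  (xi : C) : 'I_n.-1 -> C :=
  fun i => let j := (nat_of_ord i).+1 in
    ((n - j)%:R * coord1 x j - j%:R * xi * coord1 x j.+1) / ((n.-1)%:R - xi * coord1 y 1).

Definition ytilde (C : numClosedFieldType) (n : nat) (y : 'I_n.-1 -> C)
  (xi : C) : 'I_n.-1.-1 -> C :=
  fun i => let j := (nat_of_ord i).+1 in
    ((n.-1 - j)%:R * coord1 y j - j.+1%:R * xi * coord1 y j.+1) / ((n.-1)%:R - xi * coord1 y 1).

(* Main.v *)
Require Import Defs.
From HB Require Import structures.
From mathcomp Require Import all_boot all_order all_algebra.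
From mathcomp Require Import ring.
Set Implicit Arguments. Unset Strict Implicit. Unset Printing Implicit Defensive.
Import Order.TTheory GRing.Theory Num.Theory.
Local Open Scope ring_scope.

Section Lag.
Variable C : numClosedFieldType.

Definition hh (z t : C) := `|z * t - 1| ^+ 2 - `|t| ^+ 2.

Lemma norm_comb (a b u v : C) : a^* = a -> b^* = b -> a + b = 1 ->
  `|a * u + b * v| ^+ 2 = a * `|u| ^+ 2 + b * `|v| ^+ 2 - a * b * `|u - v| ^+ 2.
Proof.
move=> ha hb hab; rewrite !normCK !(rmorphD, rmorphM, rmorphN, rmorphB) /= ha hb.
have -> : b = 1 - a by rewrite -hab addrC addKr.
ring.
Qed.

Lemma hh_comb (z a b u v : C) : a^* = a -> b^* = b -> a + b = 1 ->
  hh z (a * u + b * v) = a * hh z u + b * hh z v + a * b * (1 - `|z| ^+ 2) * `|u - v| ^+ 2.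
Proof.
move=> ha hb hab; rewrite /hh.
have -> : z * (a * u + b * v) - 1 = a * (z * u - 1) + b * (z * v - 1).
  by rewrite -[1 in LHS]mulr1 -hab; ring.
rewrite !norm_comb //.
have -> : z * u - 1 - (z * v - 1) = z * (u - v) by ring.
rewrite normrM exprMn; ring.
Qed.

Lemma hh_inv (z c : C) : z != c -> hh z (1 / (z - c)) = (`|c| ^+ 2 - 1) * `|1 / (z - c)| ^+ 2.
Proof.
move=> hzc; rewrite /hh.
have hzc' : z - c != 0 by rewrite subr_eq0.
have -> : z * (1 / (z - c)) - 1 = c * (1 / (z - c)) by field.
rewrite normrM exprMn; ring.
Qed.


Lemma hh0 (z : C) : hh z 0 = 1.
Proof. by rewrite /hh mulr0 sub0r normrN normr1 normr0 expr1n expr0n /= subr0. Qed.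

Lemma conj_ratn (i j : nat) : ((i%:R / j%:R : C)^* = i%:R / j%:R).
Proof. by rewrite fmorph_div /= !conjC_nat. Qed.

Lemma inv_lem (z : C) : `|z| <= 1 -> forall k (p : {poly C}), (size p <= k.+1)%N ->
  (forall u, `|u| <= 1 -> p.[u] != 0) -> forall m, ((size p).-1 <= m)%N -> (0 < m)%N ->
  0 < hh z (p^`().[z] / (m%:R * p.[z])).
Proof.
move=> hz; elim=> [|k IH] p hs hp m hm m0.
  by rewrite (size1_polyC hs) derivC horner0 mul0r hh0 ltr01.
case: (leqP (size p) 1) => hs1.
  by rewrite (size1_polyC hs1) derivC horner0 mul0r hh0 ltr01.
have /closed_rootP [r hr] : size p != 1 by rewrite neq_ltn hs1 orbT.
case/factor_theorem: (hr) => q Dp.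
have hr1 : 1 < `|r|.
  rewrite real_ltNge ?real1 ?normr_real //; apply/negP => hr'; move: (hp r hr'); by rewrite (rootP hr) eqxx.
have pn0 : p != 0 by rewrite -size_poly_gt0 (ltn_trans _ hs1).
have qn0 : q != 0 by apply: contraNneq pn0 => q0; rewrite Dp q0 mul0r.
have sp : size p = (size q).+1.
  by rewrite Dp size_Mmonic ?monicXsubC // size_XsubC addn2.
have hq : forall u, `|u| <= 1 -> q.[u] != 0.
  move=> u hu; move: (hp u hu); rewrite Dp hornerM; apply: contraNneq => ->.
  by rewrite mul0r.
have hzr : z != r.
  apply/negP => /eqP e; move: hr1; by rewrite -e real_ltNge ?real1 ?normr_real // hz.
have hzr' : z - r != 0 by rewrite subr_eq0.
have qz : q.[z] != 0 by apply: hq.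
case: m hm m0 => [//|m'] hm _.
have hm' : ((size q).-1 <= m')%N by move: hm; rewrite sp /=; case: (size q) => [|s].
set A := q^`().[z] / (m'%:R * q.[z]).
set t := 1 / (z - r).
set a : C := m'%:R / m'.+1%:R.
set b : C := 1 / m'.+1%:R.
have mn0 : (m'.+1%:R : C) != 0 by rewrite pnatr_eq0.
have hqa : a * A = q^`().[z] / (m'.+1%:R * q.[z]).
  case: (eqVneq m' 0%N) => [m0|m0].
    have : (size q <= 1)%N by move: hm'; rewrite m0; case: (size q) => [|[]].
    move/size1_polyC => ->; rewrite derivC horner0 !mul0r /a m0 mul0r mul0r //.
  have mn0' : (m'%:R : C) != 0 by rewrite pnatr_eq0.
  rewrite /a /A; field.
  by rewrite qz mn0' addrC natr1 pnatr_eq0.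
have -> : hh z (p^`().[z] / (m'.+1%:R * p.[z])) = hh z (a * A + b * t).
  congr hh.
  rewrite hqa /t /b Dp derivM derivXsubC mulr1 hornerD !hornerM !hornerXsubC.
  by field; rewrite ?mn0 ?qz ?hzr' addrC natr1 pnatr_eq0.
rewrite (@hh_comb z a b A t); first last.
- by rewrite /a /b -mulrDl natr1 divff.
- by rewrite /b -(mulr1n (1 : C)) conj_ratn.
- by rewrite conj_ratn.
have ha : 0 <= a by rewrite /a divr_ge0 ?ler0n.
have hb : 0 < b by rewrite /b divr_gt0 ?ltr0n.
apply: ltr_wpDr.
  apply: mulr_ge0; last by rewrite exprn_ge0.
  rewrite mulr_ge0 ?subr_ge0 ?(mulr_ge0 ha (ltW hb)) //.
  by rewrite exprn_ile1.
apply: ltr_wpDl.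
  case: (eqVneq m' 0%N) => [m0|m0]; first by rewrite /a m0 !mul0r.
  by rewrite mulr_ge0 // ltW // (IH q) // ?lt0n //; rewrite -ltnS -sp.
rewrite mulr_gt0 // /t hh_inv // mulr_gt0 //.
  rewrite subr_gt0 -(expr1n _ 2%N) ltr_pXn2r //; by rewrite ?nnegrE ?normr_ge0 ?ler01.
rewrite exprn_gt0 // normr_gt0 div1r invr_eq0 //.
Qed.


Lemma laguerre (p : {poly C}) (m : nat) : ((size p).-1 <= m)%N -> (0 < m)%N ->
  (forall u, `|u| <= 1 -> p.[u] != 0) -> forall z xi, `|z| <= 1 -> `|xi| <= 1 ->
  m%:R * p.[z] + (xi - z) * p^`().[z] != 0.
Proof.
move=> hm m0 hp z xi hz hxi; apply/eqP => E.
have pz := hp z hz.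
have mn0 : (m%:R : C) != 0 by rewrite pnatr_eq0 -lt0n.
case: (eqVneq xi z) => [e|hne].
  move: E; rewrite e subrr mul0r addr0 => /eqP; by rewrite mulf_eq0 (negbTE mn0) (negbTE pz).
have hzx : z - xi != 0 by rewrite subr_eq0 eq_sym.
have E2 : p^`().[z] * (z - xi) = m%:R * p.[z].
  move/eqP: E; rewrite addr_eq0 => /eqP ->.
  by rewrite -opprB mulrN mulrC.
have H := inv_lem hz (leqSpred (size p)) hp hm m0.
have EA : p^`().[z] / (m%:R * p.[z]) = 1 / (z - xi).
  have dn0 : p^`().[z] != 0.
    apply: contraNneq (mulf_neq0 mn0 pz) => d0; by rewrite -E2 d0 mul0r.
  rewrite -E2; field; by rewrite hzx dn0.
move: H; rewrite EA hh_inv 1?eq_sym //.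
have hle : (`|xi| ^+ 2 - 1) * `|1 / (z - xi)| ^+ 2 <= 0.
  rewrite mulr_le0_ge0 ?exprn_ge0 // subr_le0 exprn_ile1 //.
by move=> H; move: (lt_le_trans H hle); rewrite ltxx.
Qed.


Lemma coord1_lt N (v : 'I_N -> C) j (h : (j < N)%N) : coord1 v j.+1 = v (Ordinal h).
Proof. by rewrite /coord1 /= insubT /=; congr v; apply: val_inj. Qed.

Definition Ycoef M (y : 'I_M -> C) (j : nat) : C := if j == 0%N then 1 else coord1 y j.

Definition pol N (x : 'I_N -> C) (y : 'I_N.-1 -> C) (w : C) : {poly C} :=
  \poly_(j < N) ((-1) ^+ j * (Ycoef y j - w * coord1 x j.+1)).

Lemma pol_horner N (x : 'I_N -> C) (y : 'I_N.-1 -> C) w z : (0 < N)%N ->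
  (pol x y w).[z] = QN y z - w * PN x z.
Proof.
case: N x y => [//|N] x y _.
rewrite /pol horner_poly /QN /PN.
under eq_bigr do rewrite mulrBr mulrBl mulrA.
rewrite sumrB mulr_sumr; congr (_ - _); last first.
  by apply: eq_bigr => i _; ring.
rewrite big_ord_recl /= /Ycoef /= expr0 !mul1r big_add1 /= big_mkord.
congr (_ + _); apply: eq_bigr => i _ /=; by rewrite mulrA.
Qed.


Lemma auxD0 (D s b w : C) : D != 0 -> D * (s * (1 - w * (b / D))) = s * (D - w * b).
Proof. by move=> hD; field. Qed.

Lemma auxD (D s a b w : C) : D != 0 -> D * (s * (a / D - w * (b / D))) = s * (a - w * b).
Proof. by move=> hD; field. Qed.

Lemma coefXd (p : {poly C}) i : ('X * p^`())`_i = p`_i *+ i.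
Proof. by rewrite coefXM; case: i => [|i] //=; rewrite coef_deriv. Qed.

Lemma polar_id n (x : 'I_n -> C) (y : 'I_n.-1 -> C) xi w : (2 <= n)%N ->
  (n.-1)%:R - xi * coord1 y 1 != 0 ->
  (n.-1)%:R *: pol x y w + xi *: (pol x y w)^`() - 'X * (pol x y w)^`() =
  ((n.-1)%:R - xi * coord1 y 1) *: pol (xtilde x y xi) (ytilde y xi) w.
Proof.
case: n x y => [//|k] x y hk /= hD.
apply/polyP => i.
rewrite coefB coefD !coefZ coefXd coef_deriv /pol !coef_poly.
case: (ltnP i k) => hi; last first.
  rewrite mulr0 [(i.+1 < _)%N]ltnS (ltnNge i k) hi /= mul0rn mulr0 addr0.
  case: (eqVneq i k) => [->|ne].
  by rewrite ltnSn mulr_natl subrr.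
  have ki : (k < i)%N by rewrite ltn_neqAle eq_sym ne hi.
  by rewrite ltnS leqNgt ki /= mulr0 mul0rn subrr.
rewrite (ltn_trans hi (ltnSn k)) [(i.+1 < _)%N]ltnS hi.
have hi1 : (i.+1 < k.+1)%N by [].
rewrite (coord1_lt _ hi) /xtilde /= subSS natrB ?(ltnW hi) //.
rewrite /Ycoef /= exprS.
case: i hi hi1 => [|i] hi hi1 /=.
  by rewrite (auxD0 _ _ _ hD); ring.

have hi' : (i < k.-1)%N by rewrite -ltnS prednK // (ltn_trans _ hi).
rewrite (coord1_lt _ hi') /ytilde /= natrB ?(ltnW hi) //.
rewrite (auxD _ _ _ _ hD).
ring.
Qed.

End Lag.

Unset Implicit Arguments.

Lemma polar_eval (C : numClosedFieldType) n (x : 'I_n -> C) (y : 'I_n.-1 -> C) xi w z :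
  (2 <= n)%N -> (n.-1)%:R - xi * coord1 y 1 != 0 ->
  (n.-1)%:R * (pol x y w).[z] + (xi - z) * (pol x y w)^`().[z] =
  ((n.-1)%:R - xi * coord1 y 1) * (pol (xtilde x y xi) (ytilde y xi) w).[z].
Proof.
move=> hn hD; have := congr1 (fun p => p.[z]) (@polar_id C n x y xi w hn hD).
rewrite /= hornerD hornerN hornerD !hornerZ hornerM hornerX => <-.
by rewrite mulrBl addrA.
Qed.

Theorem theorem3p4 (C : numClosedFieldType) (n : nat) (hn : (3 <= n)%N)
  (x : 'I_n -> C) (y : 'I_n.-1 -> C) :
  G1 x y <->
  (forall xi : C, `|xi| <= 1 ->
     ((n.-1)%:R - xi * coord1 y 1 != 0) /\ G1 (xtilde x y xi) (ytilde y xi)).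
Proof.
have hn2 : (2 <= n)%N by apply: ltnW.
have hn0 : (0 < n)%N by apply: ltnW.
have hn1 : (0 < n.-1)%N by rewrite -ltnS prednK.
have hsz : forall w, ((size (pol x y w)).-1 <= n.-1)%N.
  by move=> w; rewrite -!subn1 leq_sub2r // size_poly.
split.
  move=> G xi hxi.
  have hp : forall w, `|w| <= 1 -> forall u, `|u| <= 1 -> (pol x y w).[u] != 0.
    by move=> w hw u hu; rewrite pol_horner //; apply: G.
  have hD : (n.-1)%:R - xi * coord1 y 1 != 0.
    have h0 : `|0 : C| <= 1 by rewrite normr0 ler01.
    have := laguerre (hsz 0) hn1 (hp 0 h0) h0 hxi.
    rewrite !horner_coef0 subr0 coef_deriv /pol !coef_poly hn0 (leq_trans _ hn2) //.
    rewrite /Ycoef /= !mul0r !subr0 expr0 expr1 !mul1r mulr1n mulN1r mulrN. by rewrite mulr1.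
  split=> // z w hz hw.
  rewrite -pol_horner //.
  have := laguerre (hsz w) hn1 (hp w hw) hz hxi.
  rewrite polar_eval //; apply: contraNneq => ->; by rewrite mulr0.
move=> H z w hz hw; rewrite -pol_horner //.
apply/negP => /eqP P0.
have [hD Gt] := H z hz.
have := @polar_eval C n x y z w z hn2 hD.
rewrite P0 subrr mulr0 mul0r addr0 => /esym /eqP.
rewrite mulf_eq0 (negbTE hD) /= pol_horner //.
by apply/negP; apply: Gt.
Qed.
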